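(* Let $(Y_t,X_t)_{t\ge1}$ be a hidden Markov model with finite state space $S$, $T\ge1$, and $x^T\in\mathcal X^T$ with $p(x^T)>0$. For each $k\in\{1,\dots,T\}$ let $v(x^T;k)$ be any minimizer over $s^T\in S^T$ of $\bar R_k(s^T|x^T)$. Then: (i) for every $k\in\{1,\dots,T\}$ and every $s^T\in S^T$, $\bar R_k(s^T|x^T)=(k-1)\bar R_\infty(s^T|x^T)+\bar R_1(s^T|x^T)$; (ii) for every $k\in\{2,\dots,T\}$, $v(x^T;k)$ is admissible, i.e. $p(v(x^T;k)|x^T)>0$; (iii) for every $k\in\{2,\dots,T\}$, $\bar R_\infty(v(x^T;k)|x^T)\le\bar R_\infty(v(x^T;k-1)|x^T)$; (iv) for every $k\in\{2,\dots,T\}$, $\bar R_1(v(x^T;k)|x^T)\ge\bar R_1(v(x^T;k-1)|x^T)$.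
   Context: Hidden Markov model: $Y$ is a Markov chain on finite $S$; given $Y$, the $X_t$ are conditionally independent and $X_t$ has density $f_s$ when $Y_t=s$. Posterior path law $p(s^T|x^T)=\mathbf P(Y^T=s^T|X^T=x^T)$; for $1\le a\le b\le T$, $p(s_a^b|x^T)=\mathbf P(Y_a^b=s_a^b|X^T=x^T)$ with $s_a^b=(s_a,\dots,s_b)$. For a positive integer $k$: $\bar R_k(s^T|x^T)=-\frac1T\ln\prod_{j=1-k}^{T-1}p(s_{(j+1)\vee1}^{(j+k)\wedge T}|x^T)$ (so $\bar R_1(s^T|x^T)=-\frac1T\sum_{t=1}^T\ln\mathbf P(Y_t=s_t|X^T=x^T)$), and $\bar R_\infty(s^T|x^T)=-\frac1T\ln p(s^T|x^T)$. Here $\vee=\max$, $\wedge=\min$, $\ln0=-\infty$. *)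

(* Defs.v *)
From HB Require Import structures.
From mathcomp Require Import all_boot all_order all_algebra.
From mathcomp Require Import all_classical all_reals all_analysis.
Set Implicit Arguments. Unset Strict Implicit. Unset Printing Implicit Defensive.
Import Order.TTheory GRing.Theory Num.Theory.
Local Open Scope ring_scope.

(* Hidden Markov model observed up to time T = n.+1 (so T >= 1).
   Times are 0-based: t : 'I_T stands for time t+1 of the paper.
   pi0 = initial law of Y_1, P = transition matrix of Y,
   f s y = emission density f_s evaluated at y, x = observed x^T. *)
Section HMM.
Variables (R : realType) (S : finType) (X : Type) (n : nat).
Variables (pi0 : S -> R) (P : S -> S -> R) (f : S -> X -> R) (x : 'I_n.+1 -> X).

Definition hmm_path := {ffun 'I_n.+1 -> S}.

Definition hmm_weight (s : hmm_path) : R :=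
  pi0 (s ord0) * f (s ord0) (x ord0) *
  \prod_(t < n) (P (s (widen_ord (leqnSn n) t)) (s (lift ord0 t))
                 * f (s (lift ord0 t)) (x (lift ord0 t))).

Definition hmm_px : R := \sum_(s : hmm_path) hmm_weight s.

Definition hmm_post (s : hmm_path) : R := hmm_weight s / hmm_px.

Definition hmm_post_block (a b : nat) (s : hmm_path) : R :=
  \sum_(s' : hmm_path | [forall t : 'I_n.+1, ((a <= t <= b)%N) ==> (s' t == s t)])
     hmm_post s'.

Definition eln (r : R) : \bar R := if r == 0 then (-oo)%E else (ln r)%:E.

(* \bar R_k(s^T | x^T).  The paper's index j = 1-k .. T-1 is i = j+k-1 = 0 .. T+k-2,
   and the (1-based) window [(j+1) v 1, (j+k) ^ T] is the 0-based window
   [i - (k-1) (truncated), min(i, T-1)]. *)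
Definition Rbar (k : nat) (s : hmm_path) : \bar R :=
  ((- eln (\prod_(i < n + k) hmm_post_block (i - k.-1)%N (minn i n) s))
     * ((n.+1)%:R^-1)%:E)%E.

Definition Rinf (s : hmm_path) : \bar R :=
  ((- eln (hmm_post s)) * ((n.+1)%:R^-1)%:E)%E.

End HMM.

(* Main.v *)
Require Import Defs.
From HB Require Import structures.
From mathcomp Require Import all_boot all_order all_algebra.
From mathcomp Require Import all_classical all_reals all_analysis.
From mathcomp Require Import zify ring lra.
Import Order.TTheory GRing.Theory Num.Theory.
Local Open Scope ring_scope.
Set Implicit Arguments. Unset Strict Implicit. Unset Printing Implicit Defensive.

Section Aux.
Variables (R : realType) (S : finType) (X : Type) (n : nat).
Variables (pi0 : S -> R) (P : S -> S -> R) (f : S -> X -> R) (x : 'I_n.+1 -> X).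
Hypothesis pi0_ge0 : forall s, 0 <= pi0 s.
Hypothesis P_ge0 : forall s s', 0 <= P s s'.
Hypothesis f_ge0 : forall s y, 0 <= f s y.
Hypothesis px_gt0 : 0 < hmm_px pi0 P f x.

Local Notation path := (hmm_path S n).
Local Notation w := (hmm_weight pi0 P f x).
Local Notation post := (hmm_post pi0 P f x).
Local Notation W := (hmm_post_block pi0 P f x).

Definition glue (c : nat) (u v : path) : path :=
  [ffun i : 'I_n.+1 => if (i <= c)%N then u i else v i].

Lemma weight_glue c (u v : path) :
  (forall i : 'I_n.+1, nat_of_ord i = c -> u i = v i) ->
  w u * w v = w (glue c u v) * w (glue c v u).
Proof.
move=> huv; rewrite /hmm_weight /glue !ffunE /=.
rewrite [LHS]mulrACA [RHS]mulrACA -!big_split /=; congr (_ * _).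
apply: eq_bigr => t _; rewrite !ffunE /= ?lift0.
have [ht|ht] := leqP t.+1 c.
  by rewrite (ltnW ht).
have [htc|htc] := leqP t c.
  have ec : nat_of_ord t = c by lia.
  by rewrite (huv (widen_ord (leqnSn n) t) ec) mulrC.
by rewrite mulrC.
Qed.

Lemma post_ge0 s : 0 <= post s.
Proof.
rewrite /hmm_post divr_ge0 ?(ltW px_gt0) // /hmm_weight.
apply: mulr_ge0; first exact: mulr_ge0.
by apply: prodr_ge0 => t _; apply: mulr_ge0.
Qed.

Lemma post_glue c (u v : path) :
  (forall i : 'I_n.+1, nat_of_ord i = c -> u i = v i) ->
  post u * post v = post (glue c u v) * post (glue c v u).
Proof.
move=> h; rewrite /hmm_post mulrACA [RHS]mulrACA.
by rewrite (weight_glue h).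
Qed.

Lemma glue_inv c : cancel (fun p : path * path => (glue c p.1 p.2, glue c p.2 p.1))
                          (fun p : path * path => (glue c p.1 p.2, glue c p.2 p.1)).
Proof.
move=> [u v] /=; congr (_, _); apply/ffunP => i; rewrite !ffunE;
  by case: leqP.
Qed.

Lemma markov (a c b : nat) (s : path) : (a <= c <= b)%N -> (c <= n)%N ->
  W a b s * W c c s = W a c s * W c b s.
Proof.
move=> /andP[ac cb] cn.
rewrite /hmm_post_block !big_distrlr /= !pair_big /=.
rewrite [RHS](reindex_inj (can_inj (glue_inv c))) /=.
apply: eq_big => [[u v]|[u v]] /=.
  apply/idP/idP.
  - case/andP => /forallP hu /forallP hv; apply/andP; split; apply/forallP => t;
      apply/implyP => ht; rewrite /glue ffunE.
    + have -> : (t <= c)%N by lia.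
      by apply: (implyP (hu t)); lia.
    + case: ifP => htc.
        by apply: (implyP (hv t)); lia.
      by apply: (implyP (hu t)); lia.
  - case/andP => /forallP hu /forallP hv; apply/andP; split; apply/forallP => t;
      apply/implyP => ht.
    + case: (leqP t c) => htc.
        by have := implyP (hu t); rewrite /glue ffunE htc; apply; lia.
      by have := implyP (hv t); rewrite /glue ffunE (leqNgt t c) htc; apply; lia.
    + by have := implyP (hv t); rewrite /glue ffunE (_ : (t <= c)%N); [apply; lia|lia].
case/andP => /forallP hu /forallP hv; apply: post_glue => i hi.
have h1 : (a <= i <= b)%N by lia.
have h2 : (c <= i <= c)%N by lia.
by rewrite (eqP (implyP (hu i) h1)) (eqP (implyP (hv i) h2)).
Qed.

Lemma W_mono lo hi lo' hi' s : (lo <= lo')%N -> (hi' <= hi)%N ->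
  W lo hi s <= W lo' hi' s.
Proof.
move=> h1 h2; rewrite /hmm_post_block [X in _ <= X]big_mkcond [X in X <= _]big_mkcond /=.
apply: ler_sum => s' _.
case: ifP => H1; case: ifP => H2 //; last by rewrite post_ge0.
move/forallP: H1 => H1; move/negP: H2; case; apply/forallP => t.
by apply/implyP => ht; apply: (implyP (H1 t)); lia.
Qed.

Lemma W_ge0 a b s : 0 <= W a b s.
Proof. by apply: sumr_ge0 => s' _; apply: post_ge0. Qed.

Lemma W_full s : W 0 n s = post s.
Proof.
rewrite /hmm_post_block (big_pred1 s) // => s' /=.
apply/forallP/eqP => [H|->]; last by move=> t; rewrite eqxx implybT.
by apply/ffunP => t; apply/eqP; apply: (implyP (H t)); have := ltn_ord t; lia.
Qed.
End Aux.

Lemma prod_exp (R : comRingType) (F : nat -> R) lo hi N : (lo <= hi <= N)%N ->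
  \prod_(lo <= t < hi) F t = \prod_(t < N) F t ^+ (lo <= t < hi)%N.
Proof.
move=> /andP[h1 h2]; rewrite -(big_mkord xpredT (fun t => F t ^+ (lo <= t < hi)%N)).
rewrite (@big_cat_nat _ _ _ lo 0 N) ?(leq_trans h1 h2) //= (@big_cat_nat _ _ _ hi lo N) //=.
have -> : \prod_(0 <= i < lo) F i ^+ (lo <= i < hi)%N = 1.
  apply: big1_seq => i; change nat in i; rewrite mem_index_iota => /andP[_ hi'].
  have hf : (lo <= i < hi)%N = false by apply/negbTE; lia.
  by rewrite hf.
have -> : \prod_(hi <= i < N) F i ^+ (lo <= i < hi)%N = 1.
  apply: big1_seq => i; change nat in i; rewrite mem_index_iota => /andP[_ hi'].
  have hf : (lo <= i < hi)%N = false by apply/negbTE; lia.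
  by rewrite hf.
rewrite mul1r mulr1.
apply: eq_big_seq => i; rewrite mem_index_iota => ->; exact: expr1.
Qed.

Lemma count_ind a b N : (a <= b)%N ->
  (\sum_(i < N) (a <= i < b)%N)%N = (minn b N - minn a N)%N.
Proof.
move=> ab; elim: N => [|N IH]; first by rewrite big_ord0; lia.
rewrite big_ord_recr /= IH.
case: (boolP (a <= N < b)%N) => /= H; lia.
Qed.


Section Aux2.
Variables (R : realType) (S : finType) (X : Type) (n : nat).
Variables (pi0 : S -> R) (P : S -> S -> R) (f : S -> X -> R) (x : 'I_n.+1 -> X).
Hypothesis pi0_ge0 : forall s, 0 <= pi0 s.
Hypothesis P_ge0 : forall s s', 0 <= P s s'.
Hypothesis f_ge0 : forall s y, 0 <= f s y.
Hypothesis px_gt0 : 0 < hmm_px pi0 P f x.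

Local Notation path := (hmm_path S n).
Local Notation post := (hmm_post pi0 P f x).
Local Notation W := (hmm_post_block pi0 P f x).

Definition D (s : path) t := W t t s.
Definition G (s : path) t := W t t.+1 s / (D s t * D s t.+1).

Lemma chain s : (forall t, (t <= n)%N -> 0 < D s t) -> forall a b, (a <= b <= n)%N ->
  W a b s = \prod_(a <= t < b.+1) D s t * \prod_(a <= t < b) G s t.
Proof.
move=> Dpos a b /andP[ab bn].
have base : forall c, W c c s = \prod_(c <= t < c.+1) D s t * \prod_(c <= t < c) G s t.
  by move=> c; rewrite big_nat1 big_geq // mulr1.
elim: b ab bn => [|b IH] ab bn.
  by have -> : a = 0%N by lia.
case: (eqVneq a b.+1) => [->|ne]; first exact: base.
have ab' : (a <= b)%N by lia.
have hb : D s b != 0 by rewrite gt_eqF // Dpos //; lia.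
have hb1 : D s b.+1 != 0 by rewrite gt_eqF // Dpos.
apply: (mulIf hb).
rewrite {1}/D (markov px_gt0) ?ab' //; last lia.
rewrite IH //; last lia.
rewrite [\prod_(a <= t < b.+2) _]big_nat_recr /=; last lia.
rewrite [\prod_(a <= t < b.+1) _]big_nat_recr /=; last lia.
rewrite [\prod_(a <= t < b.+1) _]big_nat_recr /=; last lia.
rewrite /G; field.
  by rewrite hb hb1.
by rewrite leqnSn.
Qed.

Lemma win s k : (forall t, (t <= n)%N -> 0 < D s t) -> (1 <= k <= n.+1)%N ->
  \prod_(i < n + k) W (i - k.-1) (minn i n) s =
  (\prod_(t < n.+1) D s t) ^+ k * (\prod_(t < n) G s t) ^+ k.-1.
Proof.
move=> Dpos /andP[k1 kn].
transitivity (\prod_(i < n + k) (\prod_(t < n.+1) D s t ^+ (i - k.-1 <= t < (minn i n).+1)%N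
     * \prod_(t < n) G s t ^+ (i - k.-1 <= t < minn i n)%N)).
  apply: eq_bigr => i _; have := ltn_ord i => hi.
  rewrite (chain Dpos); last lia.
  rewrite (@prod_exp _ _ _ _ n.+1); last lia.
  by rewrite (@prod_exp _ _ _ _ n); last lia.
rewrite big_split /= -!prodrXl.
rewrite [X in X * _]exchange_big [X in _ * X]exchange_big /=.
congr (_ * _); apply: eq_bigr => t _; rewrite prodrXr; congr (_ ^+ _);
  have := ltn_ord t => ht.
  rewrite (eq_bigr (fun i : 'I_(n + k) => nat_of_bool (t <= i < t + k)%N)); last first.
    by move=> i _; congr nat_of_bool; apply/idP/idP; lia.
  rewrite count_ind; lia.
rewrite (eq_bigr (fun i : 'I_(n + k) => nat_of_bool (t.+1 <= i < t + k)%N)); last first.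
  by move=> i _; congr nat_of_bool; apply/idP/idP; lia.
rewrite count_ind; lia.
Qed.

Lemma win_zero s k t : (1 <= k)%N -> (t <= n)%N -> D s t = 0 ->
  \prod_(i < n + k) W (i - k.-1) (minn i n) s = 0.
Proof.
move=> k1 tn Dt0.
have ht : (t < n + k)%N by lia.
rewrite (bigD1 (Ordinal ht)) //= ; apply/eqP; rewrite mulf_eq0; apply/orP; left.
rewrite eq_le (W_ge0 pi0_ge0 P_ge0 f_ge0 px_gt0) andbT -Dt0 /D.
have -> : minn t n = t by lia.
by apply: (W_mono pi0_ge0 P_ge0 f_ge0 px_gt0); lia.
Qed.

Lemma Fk_eq s k : (1 <= k <= n.+1)%N ->
  \prod_(i < n + k) W (i - k.-1) (minn i n) s =
  post s ^+ k.-1 * \prod_(i < n + 1) W (i - 1.-1) (minn i n) s.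
Proof.
move=> /andP[k1 kn].
case: (boolP [forall t : 'I_n.+1, 0 < D s t]) => [/forallP Dp | /forallPn [t Dt]].
  have Dpos : forall t, (t <= n)%N -> 0 < D s t.
    by move=> t tn; exact: (Dp (Ordinal (tn : (t < n.+1)%N))).
  rewrite (win Dpos) ?k1 // (win (k:=1) Dpos) //.
  rewrite -(W_full px_gt0) (@chain s Dpos 0 n) ?leq0n //= -!(big_mkord xpredT) /=.
  rewrite expr1 expr0 mulr1 exprMn.
  have -> : k = k.-1.+1 by lia.
  by rewrite exprS /= [RHS]mulrC mulrA.
have Dt0 : D s t = 0.
  apply/eqP; rewrite eq_le (W_ge0 pi0_ge0 P_ge0 f_ge0 px_gt0) andbT.
  by rewrite leNgt.
have tn : (t <= n)%N by have := ltn_ord t; lia.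
by rewrite (win_zero k1 tn Dt0) (win_zero (k:=1) _ tn Dt0) // mulr0.
Qed.
End Aux2.

Lemma ealg (R : realType) (m : nat) (c : R) (ep ey : \bar R) : 0 < c -> ep != +oo%E -> ey != +oo%E ->
 (- (m%:R%:E * ep + ey) * c%:E = m%:R%:E * (- ep * c%:E) + (- ey * c%:E))%E.
Proof.
move=> c0; have c0' : (0 < c%:E)%E by rewrite lte_fin.
case: ep => [p| |] //= _; case: ey => [y| |] //= _.
- change (((-(m%:R * p + y)) * c)%:E = (m%:R * (-p * c) + -y * c)%:E).
  by congr EFin; ring.
- by rewrite gt0_mulye // addey // -!EFinM.
- case: m => [|m].
    by rewrite !mul0e !add0e.
  have m0 : (0 < m.+1%:R%:E :> \bar R)%E by rewrite lte_fin ltr0n.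
  rewrite gt0_muleNy // addNye; change (- -oo)%E with (+oo : \bar R)%E.
  rewrite !gt0_mulye // gt0_muley //.
- rewrite addeNy; change (- -oo)%E with (+oo : \bar R)%E.
  rewrite !gt0_mulye // addey //.
  case: m => [|m]; first by rewrite mul0e.
  by rewrite gt0_muley // lte_fin ltr0n.
Qed.

Lemma eln_neq (R : realType) (p : R) : eln p != +oo%E.
Proof. by rewrite /eln; case: ifP. Qed.

Lemma eln_mul (R : realType) (p y : R) m : 0 <= p -> 0 <= y ->
  eln (p ^+ m * y) = (m%:R%:E * eln p + eln y)%E.
Proof.
move=> p0 y0; rewrite /eln.
case: (eqVneq y 0) => [->|yn]; first by rewrite mulr0 eqxx addeNy.
have yp : 0 < y by rewrite lt_def yn.
case: (eqVneq p 0) => [->|pn].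
  case: m => [|m]; first by rewrite expr0 mul1r (negbTE yn) mul0e add0e.
  rewrite expr0n mul0r eqxx gt0_muleNy ?lte_fin ?ltr0n //.
have pp : 0 < p by rewrite lt_def pn.
rewrite mulf_eq0 expf_eq0 (negbTE pn) (negbTE yn) andbF /=.
by rewrite lnM ?posrE ?exprn_gt0 // lnXn // -EFinM mulr_natl.
Qed.


Section Aux3.
Variables (R : realType) (S : finType) (X : Type) (n : nat).
Variables (pi0 : S -> R) (P : S -> S -> R) (f : S -> X -> R) (x : 'I_n.+1 -> X).
Hypothesis pi0_ge0 : forall s, 0 <= pi0 s.
Hypothesis P_ge0 : forall s s', 0 <= P s s'.
Hypothesis f_ge0 : forall s y, 0 <= f s y.
Hypothesis px_gt0 : 0 < hmm_px pi0 P f x.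

Local Notation path := (hmm_path S n).
Local Notation post := (hmm_post pi0 P f x).
Local Notation W := (hmm_post_block pi0 P f x).

Definition cc : R := (n.+1)%:R^-1.
Definition F1 (s : path) := \prod_(i < n + 1) W (i - 1.-1) (minn i n) s.
Definition A (s : path) := - ln (post s) * cc.
Definition B (s : path) := - ln (F1 s) * cc.

Lemma cc_gt0 : 0 < cc.
Proof. by rewrite invr_gt0 ltr0n. Qed.

Lemma F1_ge0 s : 0 <= F1 s.
Proof. by apply: prodr_ge0 => i _; apply: (W_ge0 pi0_ge0 P_ge0 f_ge0 px_gt0). Qed.

Lemma partI k s : (1 <= k <= n.+1)%N ->
  Rbar pi0 P f x k s = (k.-1%:R%:E * Rinf pi0 P f x s + Rbar pi0 P f x 1 s)%E.
Proof.
move=> hk; rewrite /Rbar /Rinf (Fk_eq pi0_ge0 P_ge0 f_ge0 px_gt0 s hk).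
rewrite eln_mul ?(post_ge0 pi0_ge0 P_ge0 f_ge0 px_gt0) //; last exact: F1_ge0.
by apply: ealg; rewrite ?invr_gt0 ?ltr0n ?eln_neq.
Qed.

Lemma F1_gt0 s : 0 < post s -> 0 < F1 s.
Proof.
move=> ps; apply: prodr_gt0 => i _; apply: (lt_le_trans ps).
rewrite -(W_full px_gt0); apply: (W_mono pi0_ge0 P_ge0 f_ge0 px_gt0); lia.
Qed.

Lemma Rinf_fin s : 0 < post s -> Rinf pi0 P f x s = (A s)%:E.
Proof. by move=> ps; rewrite /Rinf /eln gt_eqF. Qed.

Lemma R1_fin s : 0 < post s -> Rbar pi0 P f x 1 s = (B s)%:E.
Proof. by move=> ps; rewrite /Rbar /eln -/(F1 s) gt_eqF // F1_gt0. Qed.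

Lemma Rk_fin k s : 0 < post s -> (1 <= k <= n.+1)%N ->
  Rbar pi0 P f x k s = (k.-1%:R * A s + B s)%:E.
Proof. by move=> ps hk; rewrite partI // Rinf_fin // R1_fin. Qed.

Lemma Rinf_inf s : post s = 0 -> Rinf pi0 P f x s = +oo%E.
Proof.
move=> p0; rewrite /Rinf /eln p0 eqxx; change (- -oo)%E with (+oo : \bar R)%E.
by rewrite gt0_mulye // lte_fin invr_gt0 ltr0n.
Qed.

Lemma Rk_inf k s : post s = 0 -> (2 <= k <= n.+1)%N -> Rbar pi0 P f x k s = +oo%E.
Proof.
move=> p0 hk; rewrite /Rbar (Fk_eq pi0_ge0 P_ge0 f_ge0 px_gt0); last lia.
rewrite p0 expr0n (_ : (k.-1 == 0)%N = false); last by apply/negbTE; lia.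
rewrite mul0r /eln eqxx; change (- -oo)%E with (+oo : \bar R)%E.
by rewrite gt0_mulye // lte_fin invr_gt0 ltr0n.
Qed.

Lemma exists_pos : exists s, 0 < post s.
Proof.
case: (boolP [exists s, 0 < hmm_weight pi0 P f x s]) => [/existsP [s hs]|/existsPn H].
  by exists s; rewrite /hmm_post divr_gt0.
have : hmm_px pi0 P f x <= 0.
  by apply: sumr_le0 => s _; rewrite leNgt H.
by rewrite leNgt px_gt0.
Qed.
End Aux3.

Theorem corollary6 (R : realType) (S : finType) (X : Type) (n : nat)
    (pi0 : S -> R) (P : S -> S -> R) (f : S -> X -> R) (x : 'I_n.+1 -> X)
    (v : nat -> hmm_path S n) :
  (forall s, 0 <= pi0 s) -> \sum_(s : S) pi0 s = 1 ->
  (forall s s', 0 <= P s s') -> (forall s, \sum_(s' : S) P s s' = 1) ->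
  (forall s y, 0 <= f s y) ->
  0 < hmm_px pi0 P f x ->
  (forall k, (1 <= k <= n.+1)%N ->
     forall s : hmm_path S n, (Rbar pi0 P f x k (v k) <= Rbar pi0 P f x k s)%E) ->
  [/\ (forall k, (1 <= k <= n.+1)%N -> forall s : hmm_path S n,
         Rbar pi0 P f x k s
         = ((k.-1)%:R%:E * Rinf pi0 P f x s + Rbar pi0 P f x 1 s)%E),
      (forall k, (2 <= k <= n.+1)%N -> 0 < hmm_post pi0 P f x (v k)),
      (forall k, (2 <= k <= n.+1)%N ->
         (Rinf pi0 P f x (v k) <= Rinf pi0 P f x (v k.-1))%E) &
      (forall k, (2 <= k <= n.+1)%N ->
         (Rbar pi0 P f x 1 (v k.-1) <= Rbar pi0 P f x 1 (v k))%E)].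
Proof.
move=> pi0_ge0 _ P_ge0 _ f_ge0 px_gt0 vmin.
have pge0 := post_ge0 pi0_ge0 P_ge0 f_ge0 px_gt0.
have partii : forall k, (2 <= k <= n.+1)%N -> 0 < hmm_post pi0 P f x (v k).
  move=> k hk; rewrite lt_def pge0 andbT; apply/negP => /eqP p0.
  have [s0 hs0] := exists_pos px_gt0.
  have hk1 : (1 <= k <= n.+1)%N by lia.
  have := vmin k hk1 s0.
  rewrite (Rk_inf pi0_ge0 P_ge0 f_ge0 px_gt0 p0 hk).
  rewrite (Rk_fin pi0_ge0 P_ge0 f_ge0 px_gt0 hs0); last lia.
  by rewrite leye_eq.
have key : forall j, (j.+2 <= n.+1)%N -> 0 < hmm_post pi0 P f x (v j.+1) ->
    A pi0 P f x (v j.+2) <= A pi0 P f x (v j.+1) /\ B pi0 P f x (v j.+1) <= B pi0 P f x (v j.+2).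
  move=> j hj p1.
  have p2 : 0 < hmm_post pi0 P f x (v j.+2) by apply: partii; lia.
  have hk1 : (1 <= j.+2 <= n.+1)%N by lia.
  have hk2 : (1 <= j.+1 <= n.+1)%N by lia.
  have h1 := vmin _ hk1 (v j.+1).
  have h2 := vmin _ hk2 (v j.+2).
  rewrite !(Rk_fin pi0_ge0 P_ge0 f_ge0 px_gt0) // lee_fin /= in h1 h2.
  rewrite ?lee_fin -natr1 in h1; rewrite ?lee_fin in h2.
  have j0 : 0 <= j%:R :> R by rewrite ler0n.
  have hA : A pi0 P f x (v j.+2) <= A pi0 P f x (v j.+1) by nra.
  by split => //; nra.
split.
- by move=> k hk s; exact: (partI pi0_ge0 P_ge0 f_ge0 px_gt0 s hk).
- exact: partii.
- move=> [|[|j]] // hk /=.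
  case: (eqVneq (hmm_post pi0 P f x (v j.+1)) 0) => [p0|pn].
    by rewrite (Rinf_inf p0) leey.
  have p1 : 0 < hmm_post pi0 P f x (v j.+1) by rewrite lt_def pn pge0.
  have p2 : 0 < hmm_post pi0 P f x (v j.+2) by apply: partii.
  rewrite !Rinf_fin // lee_fin.
  by case: (key j _ p1); first lia.
- move=> [|[|j]] // hk /=.
  case: j hk => [|j] hk.
    by apply: vmin; lia.
  have p1 : 0 < hmm_post pi0 P f x (v j.+2) by apply: partii; lia.
  have p2 : 0 < hmm_post pi0 P f x (v j.+3) by apply: partii; lia.
  rewrite !(R1_fin pi0_ge0 P_ge0 f_ge0 px_gt0) // lee_fin.
  by case: (key j.+1 _ p1); first lia.
Qed.
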